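(* With the notation of the context, for every $\rho\in(-1,1)$ we have $D\le p\le G$ and $$V_D(x_0,s_0,\lambda)\le V(x_0,s_0,\lambda)\le V_G(x_0,s_0,\lambda).$$
   Context: Fix $T>0$, $r,\nu,\mu,x_0\in\mathbb R$, $\eta>0$, $\sigma>0$, $\rho\in(-1,1)$, $s_0>0$, $\lambda>0$, $\gamma>0$; $N$ is a standard Gaussian random variable; $W$ is the Lambert function (inverse of $x\in(-1,\infty)\mapsto xe^x$). Let $\theta=\lambda\gamma(1-\rho^2)$, $w=W\left(s_0\eta^2Te^{(\nu-\eta\rho\frac{\mu-r}{\sigma}-\frac{\eta^2}{2})T}\theta\right)$, $$D=\frac{\lambda e^{-rT}}{\theta\eta^2T}w\left(1+\frac w2\right),\qquad G=\frac{\lambda e^{-rT}}{\theta}\frac{w}{\eta^2T}\left(e^{\frac{\eta^2}{2}T}+\frac w2\right).$$ The asking reservation price of $\lambda$ units of the non-traded stock and the associated value function are $$p=-\frac{e^{-rT}}{\gamma(1-\rho^2)}\ln\mathbb E\exp\left(-\theta s_0e^{(\nu-\eta\rho\frac{\mu-r}{\sigma}-\frac{\eta^2}{2})T}e^{\eta\sqrt TN}\right),\qquad V(x_0,s_0,\lambda)=-\frac1\gamma\exp\left(-\gamma e^{rT}(x_0+p)-\frac{(\mu-r)^2}{2\sigma^2}T\right),$$ (model: non-traded $dS=S(\nu dt+\eta dZ)$, traded $dP=P(\mu dt+\sigma dB)$, correlation $\rho$, bond rate $r$, utility $-\frac1\gamma e^{-\gamma x}$), and for $X\in\{D,G\}$,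 $$V_X(x_0,s_0,\lambda)=-\frac1\gamma\exp\left(-\gamma e^{rT}(x_0+X)-\frac{(\mu-r)^2}{2\sigma^2}T\right).$$ *)

(* Defs.v *)
From HB Require Import structures.
From mathcomp Require Import all_boot all_order all_algebra.
From mathcomp Require Import all_classical all_reals all_analysis.
Set Implicit Arguments. Unset Strict Implicit. Unset Printing Implicit Defensive.
Import Order.TTheory GRing.Theory Num.Theory.
Import numFieldNormedType.Exports.
Local Open Scope classical_set_scope.
Local Open Scope ring_scope.

Section Defs.
Variable R : realType.

(* Lambert function W : inverse of x \in (-1, oo) |-> x e^x
   (used only at positive arguments, where the preimage is unique). *)
Definition LambertW (y : R) : R :=
  xget 0 [set w : R | -1 < w /\ w * expR w = y].

Definition std_gauss_expect (f : R -> R) : R :=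
  fine (\int[normal_prob (0:R) 1]_x (f x)%:E)%E.

Definition drift (nu eta rho mu r sigma : R) : R :=
  nu - eta * rho * ((mu - r) / sigma) - eta ^+ 2 / 2.

Definition theta (lambda gamma rho : R) : R := lambda * gamma * (1 - rho ^+ 2).

Definition w_Lambert (T r nu mu eta sigma rho s0 lambda gamma : R) : R :=
  LambertW (s0 * eta ^+ 2 * T * expR (drift nu eta rho mu r sigma * T)
            * theta lambda gamma rho).

Definition D_bound (T r nu mu eta sigma rho s0 lambda gamma : R) : R :=
  let w := w_Lambert T r nu mu eta sigma rho s0 lambda gamma in
  lambda * expR (- r * T) / (theta lambda gamma rho * eta ^+ 2 * T)
    * w * (1 + w / 2).

Definition G_bound (T r nu mu eta sigma rho s0 lambda gamma : R) : R :=
  let w := w_Lambert T r nu mu eta sigma rho s0 lambda gamma in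
  lambda * expR (- r * T) / theta lambda gamma rho * (w / (eta ^+ 2 * T))
    * (expR (eta ^+ 2 / 2 * T) + w / 2).

Definition price (T r nu mu eta sigma rho s0 lambda gamma : R) : R :=
  - (expR (- r * T) / (gamma * (1 - rho ^+ 2)))
  * ln (std_gauss_expect (fun x =>
          expR (- (theta lambda gamma rho * s0
                   * expR (drift nu eta rho mu r sigma * T)
                   * expR (eta * Num.sqrt T * x))))).

Definition value_fun (T r mu sigma gamma x0 X : R) : R :=
  - (1 / gamma) * expR (- gamma * expR (r * T) * (x0 + X)
                        - (mu - r) ^+ 2 / (2 * sigma ^+ 2) * T).

End Defs.

(* Main.v *)
Require Import Defs.
From HB Require Import structures.
From mathcomp Require Import all_boot all_order all_algebra.
From mathcomp Require Import all_classical all_reals all_analysis.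
From mathcomp Require Import measurable_realfun charge ring lra.
Import Order.TTheory GRing.Theory Num.Theory.
Import numFieldNormedType.Exports.
Local Open Scope classical_set_scope.
Local Open Scope ring_scope.

Section G.
Variable R : realType.
Local Notation mu := (@lebesgue_measure R).
Local Notation P := (@normal_prob R 0 1).

Lemma gauss_dens (f : R -> R) : (forall x, 0 <= f x) ->
  measurable_fun setT f ->
  (\int[P]_x (f x)%:E = \int[mu]_x ((f x)%:E * (normal_pdf 0 1 x)%:E))%E.
Proof.
move=> f0 mf.
have nd := @normal_prob_dominates R 0 1.
rewrite -(Radon_Nikodym_SigmaFinite.change_of_variables nd)//.
apply: ae_eq_integral => //.
- apply: emeasurable_funM; first exact/measurable_EFinP.
  apply: measurable_int; exact: (Radon_Nikodym_SigmaFinite.f_integrable nd).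
- apply: emeasurable_funM; first exact/measurable_EFinP.
  apply/measurable_EFinP; exact: measurable_normal_pdf.
- apply: ae_eqe_mul2l.
  apply: integral_ae_eq => //.
  + exact: (Radon_Nikodym_SigmaFinite.f_integrable nd).
  + apply/measurable_EFinP; exact: measurable_normal_pdf.
  + move=> E _ mE.
    by rewrite -(Radon_Nikodym_SigmaFinite.f_integral nd).
exact/measurable_EFinP.
Qed.

Lemma mgf (b : R) :
  (\int[P]_x (expR (b * x))%:E = (expR (b ^+ 2 / 2))%:E)%E.
Proof.
rewrite gauss_dens; last 2 first.
- by move=> x; exact: expR_ge0.
- by apply: measurableT_comp => //; exact: measurable_funM.
transitivity (\int[mu]_x ((expR (b ^+ 2 / 2))%:E * (normal_pdf b 1 x)%:E))%E.
  apply: eq_integral => x _; rewrite -!EFinM; congr EFin.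
  rewrite /normal_pdf oner_eq0 /= /normal_fun mulrCA -expRD mulrCA -expRD.
  congr (_ * expR _); rewrite expr1n; by field.
transitivity (((expR (b ^+ 2 / 2))%:E * (\int[mu]_x (normal_pdf b 1 x)%:E))%E); last first.
  by rewrite integral_normal_pdf mule1.
apply: ge0_integralZl => //.
- by apply/measurable_EFinP; exact: measurable_normal_pdf.
- by move=> x _; rewrite lee_fin normal_pdf_ge0.
Qed.

Lemma mgfZ (k b : R) : 0 <= k ->
  (\int[P]_x (k * expR (b * x))%:E = (k * expR (b ^+ 2 / 2))%:E)%E.
Proof.
move=> k0.
transitivity ((k%:E * \int[P]_x (expR (b * x))%:E)%E); last by rewrite mgf.
under eq_integral do rewrite EFinM.
apply: ge0_integralZl => //.
all: try (by move=> x _; rewrite lee_fin expR_ge0).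
all: try (by apply/measurable_EFinP; apply: measurableT_comp => //; exact: measurable_funM).
Qed.

Lemma meas_g (c s : R) :
  measurable_fun setT (fun x : R => expR (- (c * expR (s * x)))).
Proof.
apply: measurableT_comp => //; apply: measurableT_comp => //.
apply: measurable_funM => //; apply: measurableT_comp => //.
Qed.

Lemma upper (c s w : R) : 0 < s -> 0 < w -> w * expR w = c * s ^+ 2 ->
 (\int[P]_x (expR (- (c * expR (s * x))))%:E <=
   (expR (- (w / s ^+ 2) * (1 + w) + (w / s) ^+ 2 / 2))%:E)%E.
Proof.
move=> s0 w0 hw.
have hc : c = w * expR w / s ^+ 2.
  by rewrite hw mulfK // expf_neq0 // gt_eqF.
have -> : ((expR (- (w / s ^+ 2) * (1 + w) + (w / s) ^+ 2 / 2))%:E =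
   \int[P]_x (expR (- (w / s ^+ 2) * (1 + w)) * expR ((- (w / s)) * x))%:E)%E.
  by rewrite mgfZ ?expR_ge0 // -expRD sqrrN.
  apply: ge0_le_integral => //.
  - by apply/measurable_EFinP; exact: meas_g.
  - apply/measurable_EFinP; apply: measurable_funM => //.
    by apply: measurableT_comp => //; exact: measurable_funM.
  move=> x _; rewrite lee_fin -expRD ler_expR.
  have e1 : c * expR (s * x) = w / s ^+ 2 * expR (w + s * x).
    by rewrite hc expRD; field; rewrite gt_eqF.
  have e2 : w / s ^+ 2 * (1 + (w + s * x)) <= w / s ^+ 2 * expR (w + s * x).
    by rewrite ler_wpM2l ?expR_ge1Dx // divr_ge0 ?ltW // exprn_gt0.
  have e3 : w / s ^+ 2 * (1 + (w + s * x)) = w / s ^+ 2 * (1 + w) + w / s * x.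
    by field; rewrite gt_eqF.
  rewrite e1; lra.
Qed.

Lemma lower_pt (c s w e x a t M : R) : 0 < s -> 0 < w -> w * expR w = c * s ^+ 2 -> 0 < e ->
  a = w / s ^+ 2 -> t = w / s -> M = a * expR (s ^+ 2 / 2) ->
  expR (- M) * expR (- t ^+ 2) * (1 + M + a * s / e) * expR (- t * x) <=
  expR (- (c * expR (s * x)))
  + expR (- M) * a * expR ((s - t) * t) * expR ((s - t) * x)
  + expR (- M) * (a * s / e) * expR (- (t + e) * t) * expR (- (t + e) * x).
Proof.
move=> s0 w0 hw e0 ha ht hM.
have sn : s != 0 by rewrite gt_eqF.
have en : e != 0 by rewrite gt_eqF.
have a0 : 0 < a by rewrite ha divr_gt0 // exprn_gt0.
have hst : s * t = w by rewrite ht mulrC divfK.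
have hat : a * s = t by rewrite ha ht; field.
have hc : c = a * expR (s * t).
  rewrite hst ha.
  have -> : w / s ^+ 2 * expR w = (w * expR w) / s ^+ 2 by field.
  by rewrite hw; field.
set y := x + t.
have h1 : c * expR (s * x) = a * expR (s * y).
  by rewrite hc -mulrA -expRD /y mulrDr addrC.
set Ze := a * expR (s * y) + a * s / e * (expR (- (e * y)) - 1).
have hZ : - (a * s * y) <= a * s / e * (expR (- (e * y)) - 1).
  have := expR_ge1Dx (- (e * y)) => h.
  have -> : - (a * s * y) = a * s / e * (- (e * y)) by field.
  apply: ler_wpM2l; last lra.
  by rewrite divr_ge0 ?mulr_ge0 ?ltW.
have htan : expR (- M) * (1 + M - Ze) <= expR (- Ze).
  have := expR_ge1Dx (M - Ze) => h.
  have -> : expR (- Ze) = expR (- M) * expR (M - Ze) by rewrite -expRD; congr expR; ring.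
  apply: ler_wpM2l; [exact: expR_ge0 | lra].
have hg : expR (- (c * expR (s * x))) = expR (- (a * expR (s * y) - a * s * y)) * expR (- t * y).
  by rewrite -expRD h1 -hat; congr expR; ring.
have hmono : expR (- Ze) <= expR (- (a * expR (s * y) - a * s * y)).
  by rewrite ler_expR /Ze; lra.
have key : expR (- M) * (1 + M - Ze) * expR (- t * y) <= expR (- (c * expR (s * x))).
  rewrite hg; apply: ler_wpM2r; [exact: expR_ge0 | exact: le_trans htan hmono].
have E1 : expR (- t * y) = expR (- t ^+ 2) * expR (- t * x).
  by rewrite -expRD /y; congr expR; ring.
have E2 : expR (s * y) * expR (- t * y) = expR ((s - t) * t) * expR ((s - t) * x).
  by rewrite -!expRD /y; congr expR; ring.
have E3 : expR (- (e * y)) * expR (- t * y) = expR (- (t + e) * t) * expR (- (t + e) * x).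
  by rewrite -!expRD /y; congr expR; ring.
have expand : expR (- M) * (1 + M - Ze) * expR (- t * y) =
  expR (- M) * expR (- t ^+ 2) * (1 + M + a * s / e) * expR (- t * x)
  - expR (- M) * a * (expR (s * y) * expR (- t * y))
  - expR (- M) * (a * s / e) * (expR (- (e * y)) * expR (- t * y)).
  rewrite /Ze E1; ring.
move: key; rewrite expand E2 E3 => key.
lra.
Qed.

Lemma lower (c s w e E : R) : 0 < s -> 0 < w -> w * expR w = c * s ^+ 2 -> 0 < e ->
  (\int[P]_x (expR (- (c * expR (s * x))))%:E = E%:E)%E ->
  expR (- (w / s ^+ 2 * expR (s ^+ 2 / 2)) - (w / s) ^+ 2 / 2)
    * (1 - w / s ^+ 2 * s / e * (expR (e ^+ 2 / 2) - 1)) <= E.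
Proof.
move=> s0 w0 hw e0 hE.
set a := w / s ^+ 2; set t := w / s; set M := a * expR (s ^+ 2 / 2).
have a0 : 0 < a by rewrite divr_gt0 // exprn_gt0.
have M0 : 0 <= M by apply: mulr_ge0; [apply: ltW | apply: expR_ge0].
have as0 : 0 <= a * s / e.
  by apply: divr_ge0; [apply: mulr_ge0; apply: ltW | apply: ltW].
set k1 := expR (- M) * a * expR ((s - t) * t).
set k2 := expR (- M) * (a * s / e) * expR (- (t + e) * t).
set k3 := expR (- M) * expR (- t ^+ 2) * (1 + M + a * s / e).
have k10 : 0 <= k1.
  by apply: mulr_ge0; [apply: mulr_ge0; [exact: expR_ge0 | exact: ltW] | exact: expR_ge0].
have k20 : 0 <= k2.
  by apply: mulr_ge0; [apply: mulr_ge0; [exact: expR_ge0 | exact: as0] | exact: expR_ge0].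
have k30 : 0 <= k3.
  apply: mulr_ge0; [apply: mulr_ge0; exact: expR_ge0 | ].
  by apply: addr_ge0 => //; apply: addr_ge0.
have mexp : forall b : R, measurable_fun setT (fun x : R => expR (b * x)).
  by move=> b; apply: measurableT_comp => //; exact: measurable_funM.
have H : (\int[P]_x (k3 * expR (- t * x))%:E <=
   \int[P]_x ((expR (- (c * expR (s * x))))%:E + (k1 * expR ((s - t) * x))%:E
      + (k2 * expR (- (t + e) * x))%:E))%E.
  apply: ge0_le_integral => //.
  - by move=> x _; rewrite lee_fin mulr_ge0 ?expR_ge0.
  - by apply/measurable_EFinP; apply: measurable_funM => //; exact: mexp.
  - apply: emeasurable_funD; last by apply/measurable_EFinP; apply: measurable_funM => //; exact: mexp.
    apply: emeasurable_funD; last by apply/measurable_EFinP; apply: measurable_funM => //; exact: mexp.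
    by apply/measurable_EFinP; exact: meas_g.
  move=> x _; rewrite -!EFinD lee_fin.
  exact: (@lower_pt c s w e x a t M s0 w0 hw e0 erefl erefl erefl).
have nng : forall k b (x : R), 0 <= k -> (0 <= (k * expR (b * x))%:E)%E.
  by move=> k b x k0; rewrite lee_fin mulr_ge0 ?expR_ge0.
have mk : forall k b, measurable_fun setT (fun x : R => (k * expR (b * x))%:E).
  by move=> k b; apply/measurable_EFinP; apply: measurable_funM => //; exact: mexp.
have mg : measurable_fun setT (fun x : R => (expR (- (c * expR (s * x))))%:E).
  by apply/measurable_EFinP; exact: meas_g.
rewrite ge0_integralD in H; try (by []); try (by move=> x _; exact: nng);
  try (by move=> x _; rewrite adde_ge0 ?nng // lee_fin expR_ge0);
  try (by apply: emeasurable_funD); try (by []).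
rewrite ge0_integralD in H; try (by []); try (by move=> x _; exact: nng);
  try (by move=> x _; rewrite lee_fin expR_ge0); try (by exact: mk).
2: by apply: emeasurable_funD; [exact: mg | exact: mk].
rewrite hE !mgfZ // -!EFinD lee_fin in H.
have X0 : expR (- M - t ^+ 2 / 2) = expR (- M) * expR (- (t ^+ 2 / 2)) by rewrite -expRD.
have X1 : expR ((s - t) * t) * expR ((s - t) ^+ 2 / 2) = expR (- (t ^+ 2 / 2)) * expR (s ^+ 2 / 2).
  by rewrite -!expRD; congr expR; field.
have X2 : expR (- (t + e) * t) * expR ((- (t + e)) ^+ 2 / 2) = expR (- (t ^+ 2 / 2)) * expR (e ^+ 2 / 2).
  by rewrite -!expRD; congr expR; field.
have X3 : expR (- t ^+ 2) * expR ((- t) ^+ 2 / 2) = expR (- (t ^+ 2 / 2)).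
  by rewrite -!expRD; congr expR; field.
have hM : M = a * expR (s ^+ 2 / 2) by [].
clearbody M.
have Q1 : k3 * expR ((- t) ^+ 2 / 2) = expR (- M - t ^+ 2 / 2) * (1 + M + a * s / e).
  rewrite /k3 X0 -X3; ring.
have Q2 : k1 * expR ((s - t) ^+ 2 / 2) = expR (- M - t ^+ 2 / 2) * M.
  transitivity (expR (- M) * a * (expR ((s - t) * t) * expR ((s - t) ^+ 2 / 2))).
    by rewrite /k1; ring.
  rewrite X1 X0 hM; ring.
have Q3 : k2 * expR ((- (t + e)) ^+ 2 / 2) = expR (- M - t ^+ 2 / 2) * (a * s / e) * expR (e ^+ 2 / 2).
  transitivity (expR (- M) * (a * s / e) * (expR (- (t + e) * t) * expR ((- (t + e)) ^+ 2 / 2))).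
    by rewrite /k2; ring.
  rewrite X2 X0; ring.
rewrite Q1 Q2 Q3 in H.
set K := expR (- M - t ^+ 2 / 2) in H *.
set B := a * s / e in H *.
set X := expR (e ^+ 2 / 2) in H *.
have -> : K * (1 - B * (X - 1)) = K * (1 + M + B) - K * M - K * B * X by ring.
lra.
exact: mk.
Qed.

Lemma expm1_le (u : R) : 0 <= u -> u <= 1 / 2 -> expR u - 1 <= 2 * u.
Proof.
move=> u0 u1.
have h1 := expR_ge1Dx (- u).
have h2 : expR u * expR (- u) = 1 by rewrite -expRD subrr expR0.
have h3 := expR_gt0 u.
have h4 : expR u * (1 - u) <= 1.
  rewrite -h2; apply: ler_wpM2l; [exact: ltW | lra].
nra.
Qed.

Lemma lower_final (c s w E : R) : 0 < s -> 0 < w -> w * expR w = c * s ^+ 2 ->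
  (\int[P]_x (expR (- (c * expR (s * x))))%:E = E%:E)%E ->
  expR (- (w / s ^+ 2 * expR (s ^+ 2 / 2)) - (w / s) ^+ 2 / 2) <= E.
Proof.
move=> s0 w0 hw hE.
set K := expR _.
have K0 : 0 < K by exact: expR_gt0.
set A := w / s ^+ 2 * s.
have A0 : 0 < A by rewrite mulr_gt0 // divr_gt0 // exprn_gt0.
have key : forall e, 0 < e -> e <= 1 -> K * (1 - A * e) <= E.
  move=> e e0 e1.
  apply: le_trans (@lower c s w e E s0 w0 hw e0 hE).
  apply: ler_wpM2l; first exact: ltW.
  have hu := @expm1_le (e ^+ 2 / 2).
  have : expR (e ^+ 2 / 2) - 1 <= 2 * (e ^+ 2 / 2).
    apply: hu; first by rewrite divr_ge0 // sqr_ge0.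
    rewrite ler_pdivrMr // mul1r; nra.
  move=> h.
  have : w / s ^+ 2 * s / e * (expR (e ^+ 2 / 2) - 1) <= A / e * (2 * (e ^+ 2 / 2)).
    by apply: ler_wpM2l => //; rewrite divr_ge0 // ltW.
  have -> : A / e * (2 * (e ^+ 2 / 2)) = A * e by field; rewrite gt_eqF.
  rewrite /A; lra.
rewrite leNgt; apply/negP => hlt.
set e := Num.min 1 ((K - E) / (2 * K * A)).
have p2 : 0 < 2 * K * A by apply: mulr_gt0; [apply: mulr_gt0 | exact: A0].
have e0 : 0 < e.
  by rewrite /e lt_min ltr01 /= divr_gt0 // subr_gt0.
have e1 : e <= 1 by rewrite /e ge_min lexx.
have e2 : e <= (K - E) / (2 * K * A) by rewrite /e ge_min lexx orbT.
have := key e e0 e1.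
have : K * A * e <= (K - E) / 2.
  have -> : (K - E) / 2 = K * A * ((K - E) / (2 * K * A)) by field; rewrite !gt_eqF.
  by apply: ler_wpM2l => //; rewrite mulr_ge0 // ltW.
lra.
Qed.

Lemma lambertW_spec (y : R) : 0 < y ->
  0 < LambertW y /\ LambertW y * expR (LambertW y) = y.
Proof.
move=> y0.
have ex : exists w : R, -1 < w /\ w * expR w = y.
  have cf : continuous (fun w : R => w * expR w).
    move=> x; apply: (@continuousM _ _ id expR x) => //.
    exact: continuous_expR.
  have [c cin hc] : exists2 c : R, c \in `[0, y] & c * expR c = y.
    apply: IVT; first exact: ltW.
      exact: continuous_subspaceT.
    rewrite mul0r; apply/andP; split.
      by rewrite ge_min; apply/orP; left; exact: ltW.
    rewrite le_max; apply/orP; right.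
    have := expR_ge1Dx y; nra.
  move: cin; rewrite in_itv /= => /andP[c0 _]; exists c; split => //.
  by apply: lt_le_trans c0; rewrite ltrN10.
have [h1 h2] := xgetPex 0 ex.
rewrite /LambertW; split => //.
rewrite ltNge; apply/negP => hle.
have : LambertW y * expR (LambertW y) <= 0.
  by rewrite mulr_le0_ge0 ?expR_ge0.
rewrite /LambertW h2; lra.
Qed.

Lemma value_mono (T r mu sigma gamma x0 X Y : R) : 0 < gamma -> X <= Y ->
  value_fun T r mu sigma gamma x0 X <= value_fun T r mu sigma gamma x0 Y.
Proof.
move=> g0 XY; rewrite /value_fun !mulNr lerN2.
apply: ler_wpM2l; first by rewrite divr_ge0 // ltW.
rewrite ler_expR lerD2r lerN2.
apply: ler_wpM2l; first by rewrite mulr_ge0 ?expR_ge0 // ltW.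
by rewrite lerD2l.
Qed.
End G.

Theorem theorem4 (R : realType) (T r nu mu x0 eta sigma rho s0 lambda gamma : R) :
  0 < T -> 0 < eta -> 0 < sigma -> -1 < rho -> rho < 1 ->
  0 < s0 -> 0 < lambda -> 0 < gamma ->
  let p := price T r nu mu eta sigma rho s0 lambda gamma in
  let D := D_bound T r nu mu eta sigma rho s0 lambda gamma in
  let G := G_bound T r nu mu eta sigma rho s0 lambda gamma in
  (D <= p /\ p <= G) /\
  (value_fun T r mu sigma gamma x0 D <= value_fun T r mu sigma gamma x0 p /\
   value_fun T r mu sigma gamma x0 p <= value_fun T r mu sigma gamma x0 G).
Proof.
move=> T0 eta0 sig0 rho1 rho2 s00 l0 g0 p D G.
suff [hD hG] : D <= p /\ p <= G.
  by split => //; split; apply: value_mono.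
have rr : 0 < 1 - rho ^+ 2 by nra.
set th := theta lambda gamma rho.
have th0 : 0 < th by rewrite /th /theta !mulr_gt0.
set dr := drift nu eta rho mu r sigma.
set c := th * s0 * expR (dr * T).
set s := eta * Num.sqrt T.
have c0 : 0 < c by rewrite /c !mulr_gt0 ?expR_gt0.
have s0' : 0 < s by rewrite /s mulr_gt0 // sqrtr_gt0.
have s2 : s ^+ 2 = eta ^+ 2 * T by rewrite /s exprMn sqr_sqrtr // ltW.
set w := w_Lambert T r nu mu eta sigma rho s0 lambda gamma.
have [w0 hw] : 0 < w /\ w * expR w = c * s ^+ 2.
  have := @lambertW_spec R (s0 * eta ^+ 2 * T * expR (dr * T) * th).
  rewrite -/(w_Lambert T r nu mu eta sigma rho s0 lambda gamma) -/w.
  move=> /(_ _) [].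
    by rewrite !mulr_gt0 ?expR_gt0 // exprn_gt0.
  by move=> -> ->; split => //; rewrite s2 /c; ring.
set I := (\int[normal_prob 0 1]_x (expR (- (c * expR (s * x))))%:E)%E.
have Iup := @upper R c s w s0' w0 hw.
have I0 : (0 <= I)%E by apply: integral_ge0 => x _; rewrite lee_fin expR_ge0.
have Ifin : I \is a fin_num.
  by rewrite ge0_fin_numE // (le_lt_trans Iup) // ltry.
set E := fine I.
have hE : I = E%:E by rewrite /E fineK.
have Eup : E <= expR (- (w / s ^+ 2) * (1 + w) + (w / s) ^+ 2 / 2).
  by rewrite -lee_fin -hE.
have Elo := @lower_final R c s w E s0' w0 hw hE.
have E0 : 0 < E by apply: lt_le_trans Elo; exact: expR_gt0.
have hp : p = - (expR (- r * T) / (gamma * (1 - rho ^+ 2))) * ln E by [].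
set K := expR (- r * T) / (gamma * (1 - rho ^+ 2)).
have K0 : 0 < K by rewrite /K divr_gt0 ?expR_gt0 // mulr_gt0.
have hD' : D = K * (- (- (w / s ^+ 2) * (1 + w) + (w / s) ^+ 2 / 2)).
  rewrite /D /D_bound -/th -/w /K expr_div_n s2 /th /theta; field.
  by rewrite !gt_eqF.
have hG' : G = K * (w / s ^+ 2 * expR (s ^+ 2 / 2) + (w / s) ^+ 2 / 2).
  rewrite /G /G_bound -/th -/w /K expr_div_n s2 /th /theta.
  have -> : eta ^+ 2 * T / 2 = eta ^+ 2 / 2 * T by rewrite mulrAC.
  field.
  by rewrite !gt_eqF.
have lnup : ln E <= - (w / s ^+ 2) * (1 + w) + (w / s) ^+ 2 / 2.
  by rewrite -(expRK (- (w / s ^+ 2) * (1 + w) + (w / s) ^+ 2 / 2)) ler_ln ?posrE ?expR_gt0.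
have lnlo : - (w / s ^+ 2 * expR (s ^+ 2 / 2)) - (w / s) ^+ 2 / 2 <= ln E.
  by rewrite -(expRK (- (w / s ^+ 2 * expR (s ^+ 2 / 2)) - (w / s) ^+ 2 / 2)) ler_ln ?posrE ?expR_gt0.
rewrite hp -/K mulNr -mulrN hD' hG'; split.
  apply: ler_wpM2l; [exact: ltW | lra].
apply: ler_wpM2l; [exact: ltW | lra].
Qed.
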